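(* Let $k\ge 2$ be an integer. Every maximal (with respect to inclusion) $k$-thin subset of $\mathbb{Z}_2^\omega$ is neither Borel nor meager.
   Context: $\mathbb{Z}_2^\omega$ is the Cantor cube of infinite binary sequences indexed by $\omega=\{0,1,2,\dots\}$, with the product topology. The Hamming distance is $\mathrm{hd}(x,y)=|\{i: x(i)\ne y(i)\}|\in\omega\cup\{\omega\}$, and the minimum distance of $T\subseteq\mathbb{Z}_2^\omega$ is $\mathrm{HD}(T)=\inf\{\mathrm{hd}(x,y): x,y\in T, x\ne y\}$ (infimum of the empty set being $+\infty$). A set $T$ is $k$-thin if $\mathrm{HD}(T)\ge k$. *)

(* Defs.v *)
From HB Require Import structures.
From mathcomp Require Import all_boot all_order all_algebra.
From mathcomp Require Import boolp classical_sets functions cardinality reals topology.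
From mathcomp Require Import measure cantor.
Set Implicit Arguments. Unset Strict Implicit. Unset Printing Implicit Defensive.
Local Open Scope classical_set_scope.

(* The Cantor cube Z_2^omega = bool^nat with the product topology:
   mathcomp-analysis's [cantor_space] (= prod_topology (fun _ : nat => bool)). *)

(* hd(x,y) >= k : there are at least k (distinct) coordinates where x, y differ.
   (hd takes values in omega \cup {omega}; this covers the infinite case.) *)
Definition hd_ge (k : nat) (x y : cantor_space) : Prop :=
  exists s : seq nat, [/\ uniq s, size s = k & forall i, i \in s -> x i != y i].

Definition thin (k : nat) (T : set cantor_space) : Prop :=
  forall x y, T x -> T y -> x <> y -> hd_ge k x y.

Definition maximal_thin (k : nat) (T : set cantor_space) : Prop :=
  thin k T /\ forall T', thin k T' -> T `<=` T' -> T' = T.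

Definition Borel {X : topologicalType} (A : set X) : Prop :=
  <<s [set: X], open >> A.

Definition nowhere_dense {X : topologicalType} (A : set X) : Prop :=
  interior (closure A) = set0.

Definition meager {X : topologicalType} (A : set X) : Prop :=
  exists F : nat -> set X, (forall n, nowhere_dense (F n)) /\ A `<=` \bigcup_n F n.

(* Main.v *)
Require Import Defs.
From mathcomp Require Import all_boot classical_sets topology cantor.
From mathcomp Require Import boolp measure.
Set Implicit Arguments. Unset Strict Implicit. Unset Printing Implicit Defensive.
Local Open Scope classical_set_scope.

Definition cyl (x : cantor_space) (n : nat) : set cantor_space :=
  [set y | forall i, (i < n)%N -> y i = x i].

Lemma seq_cvg (x : cantor_space) (y : nat -> cantor_space) :
  (forall n, cyl x n (y n)) -> y @ \oo --> x.
Proof.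
move=> hy.
apply/cvg_sup => i.
move=> A /= [_ [[B Bop <-] Bfs sBfA]].
exists i.+1 => // n /= hn; apply: sBfA => /=.
by rewrite (hy n i hn).
Qed.

Lemma nbhs_cyl (x : cantor_space) (A : set cantor_space) :
  nbhs x A -> exists n, cyl x n `<=` A.
Proof.
move=> hA; apply: contrapT => hn.
have hy : forall n, exists z, cyl x n z /\ ~ A z.
  move=> n; apply: contrapT => h; apply: hn; exists n => z hz.
  by apply: contrapT => hAz; apply: h; exists z.
have [y hy'] := choice hy.
have := seq_cvg (fun n => (hy' n).1) hA.
case=> N _ hN.
exact: (hy' N).2 (hN N (leqnn N)).
Qed.

Lemma cyl_refl x m : cyl x m x.
Proof. by []. Qed.

Lemma cyl_le x m m' : (m <= m')%N -> cyl x m' `<=` cyl x m.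
Proof. by move=> hm z hz i hi; apply: hz; exact: leq_trans hi hm. Qed.

Lemma cyl_trans x y m : cyl x m y -> cyl y m `<=` cyl x m.
Proof. by move=> hy z hz i hi; rewrite hz // hy. Qed.

Lemma cyl_nbhs_self (y : cantor_space) n : nbhs y (cyl y n).
Proof.
elim: n => [|n IH].
  have -> : cyl y 0 = setT by apply/seteqP; split => // z _ i.
  exact: (@filterT _ _ (nbhs_filter y)).
have h1 : nbhs (y n) [set y n].
  by apply: open_nbhs_nbhs; split; [exact: discrete_open|].
have h2 : nbhs y ((fun z : cantor_space => z n) @^-1` [set y n]).
  exact: (@proj_continuous nat (fun _ => bool) n y _ h1).
have h3 := @filterI _ _ (nbhs_filter y) _ _ IH h2.
apply: (@filterS _ _ (nbhs_filter y) _ _ _ h3) => z [hz1 hz2] i; rewrite ltnS leq_eqVlt.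
by case/orP => [/eqP ->|/hz1]; [exact: hz2|].
Qed.

Definition flip (b z : cantor_space) : cantor_space := fun i => addb (z i) (b i).

Lemma flipK b z : flip b (flip b z) = z.
Proof. by apply: functional_extensionality_dep => i; rewrite /flip; case: (z i); case: (b i). Qed.

Lemma cyl_flip b y m z : cyl (flip b y) m z <-> cyl y m (flip b z).
Proof.
split => h i hi; have := h i hi; rewrite /flip;
  by case: (z i); case: (b i); case: (y i).
Qed.

Definition good (F : set cantor_space) := forall x m, exists y m',
  [/\ (m < m')%N, cyl y m' `<=` cyl x m & forall z, cyl y m' z -> ~ F z].

Lemma good_set0 : good set0.
Proof. move=> x m; exists x, m.+1; split; [by [] | exact: cyl_le | by move=> ? ? []]. Qed.

Lemma goodU A B : good A -> good B -> good (A `|` B).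
Proof.
move=> hA hB x m; have [y [m' [h1 h2 h3]]] := hA x m.
have [y' [m'' [h1' h2' h3']]] := hB y m'.
exists y', m''; split.
- exact: ltn_trans h1 h1'.
- by move=> z /h2' /h2.
- by move=> z hz [/(h3 _ (h2' _ hz))|/(h3' _ hz)].
Qed.

Lemma good_flip b F : good F -> good (flip b @^-1` F).
Proof.
move=> hF x m; have [y [m' [h1 h2 h3]]] := hF (flip b x) m.
exists (flip b y), m'; split => //.
- move=> z /cyl_flip /h2 /cyl_flip; by rewrite flipK.
- by move=> z /cyl_flip /h3.
Qed.

Lemma good_nd F : nowhere_dense F -> good F.
Proof.
move=> hF x m.
have [y [hy1 hy2]] : exists y, cyl x m y /\ ~ closure F y.
  apply: contrapT => h.
  have : interior (closure F) x.
    apply: (@filterS _ _ (nbhs_filter x) _ _ _ (cyl_nbhs_self x m)) => y hy.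
    by apply: contrapT => hc; apply: h; exists y.
  by rewrite hF.
have [B [hB1 hB2]] : exists B, nbhs y B /\ ~ (F `&` B !=set0).
  apply: contrapT => h; apply: hy2 => B hB.
  by apply: contrapT => hc; apply: h; exists B.
have [n hn] := nbhs_cyl hB1.
exists y, (m + n).+1; split.
- by rewrite ltnS leq_addr.
- move=> z hz; apply: (cyl_trans hy1); apply: cyl_le hz.
  exact: leq_trans (leq_addr n m) (leqnSn _).
- move=> z hz Fz; apply: hB2; exists z; split => //; apply: hn.
  apply: cyl_le hz; exact: leq_trans (leq_addl m n) (leqnSn _).
Qed.

Lemma good_baire (G : nat -> set cantor_space) : (forall n, good (G n)) ->
  forall x m, exists z, cyl x m z /\ forall n, ~ G n z.
Proof.
move=> hG x m.
have step : forall n (p : cantor_space * nat), {q : cantor_space * nat |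
    [/\ (p.2 < q.2)%N, cyl q.1 q.2 `<=` cyl p.1 p.2 &
        forall z, cyl q.1 q.2 z -> ~ G n z]}.
  move=> n [x0 m0]; apply: cid; have [y [m' H]] := hG n x0 m0; by exists (y, m').
pose p := fix p n := if n is n'.+1 then proj1_sig (step n' (p n')) else (x, m).
have hp : forall n, [/\ ((p n).2 < (p n.+1).2)%N, cyl (p n.+1).1 (p n.+1).2 `<=` cyl (p n).1 (p n).2 &
        forall z, cyl (p n.+1).1 (p n.+1).2 z -> ~ G n z].
  move=> n; exact: (proj2_sig (step n (p n))).
have hm : forall n, (n <= (p n).2)%N.
  elim => // n IH; have [h _ _] := hp n; exact: leq_ltn_trans IH h.
have hnest : forall i d, cyl (p (i + d)).1 (p (i + d)).2 `<=` cyl (p i).1 (p i).2.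
  move=> i; elim => [|d IH]; first by rewrite addn0.
  rewrite addnS => z hz; apply: IH; have [_ h _] := hp (i + d); exact: h.
have hnest' : forall a b, (a <= b)%N -> cyl (p b).1 (p b).2 `<=` cyl (p a).1 (p a).2.
  by move=> a b /subnKC <-; exact: hnest.
pose z : cantor_space := fun i => (p i.+1).1 i.
have hz : forall n, cyl (p n).1 (p n).2 z.
  move=> n i hi.
  have h1 := hnest' n (n + i.+1) (leq_addr _ _) _ (@cyl_refl _ _) i hi.
  have h2 := hnest' i.+1 (n + i.+1) (leq_addl _ _) _ (@cyl_refl _ _) i (hm i.+1).
  by rewrite /z -h2 h1.
exists z; split; first exact: (hz 0).
move=> n; have [_ _ h] := hp n; exact: h (hz n.+1).
Qed.

Lemma maxseq (s : seq nat) j : j \in s -> (j <= foldr maxn 0 s)%N.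
Proof.
elim: s => //= a s IH; rewrite in_cons => /orP [/eqP ->|/IH h].
  exact: leq_maxl.
exact: leq_trans h (leq_maxr _ _).
Qed.

Lemma hd_fin k (x y : cantor_space) : ~ hd_ge k x y ->
  exists N, forall i, (N <= i)%N -> x i = y i.
Proof.
move=> hk; apply: contrapT => hN; apply: hk.
have hN' : forall N, exists i, (N <= i)%N /\ x i != y i.
  move=> N; apply: contrapT => h; apply: hN; exists N => i hi.
  apply: contrapT => /eqP hne; apply: h; exists i; split => //.
elim: k => [|k [s [hu hs hd]]]; first by exists [::].
have [i [hi hxy]] := hN' (foldr maxn 0 s).+1.
have his : i \notin s.
  apply/negP => /maxseq h; move: (leq_ltn_trans h hi); by rewrite ltnn.
exists (i :: s); split => /=; [by rewrite his hu|by rewrite hs|].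
by move=> j; rewrite in_cons => /orP [/eqP ->|/hd].
Qed.

Definition vec (s : seq bool) : cantor_space := fun i => nth false s i.

Lemma hd_ge_sym k x y : hd_ge k x y -> hd_ge k y x.
Proof. by case=> s [hu hs hd]; exists s; split => // i /hd; rewrite eq_sym. Qed.

Lemma maximal_cover k T z : maximal_thin k T ->
  exists t s, T t /\ flip (vec s) z = t.
Proof.
move=> [hth hmax].
have [Tz|nTz] := pselect (T z).
  exists z, [::]; split => //; apply: functional_extensionality_dep => i.
  by rewrite /flip /vec nth_nil; case: (z i).
have [t [Tt ht]] : exists t, T t /\ ~ hd_ge k z t.
  apply: contrapT => h.
  have hall : forall t, T t -> hd_ge k z t.
    by move=> t Tt; apply: contrapT => hn; apply: h; exists t.
  have hT' : thin k (T `|` [set z]).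
    move=> a b [Ta|->] [Tb|->] hab.
    - exact: hth.
    - exact: hd_ge_sym (hall _ Ta).
    - exact: hall.
    - by [].
  have := hmax _ hT' (@subsetUl _ T [set z]).
  move=> e; apply: nTz; rewrite -e; by right.
have [N hN] := hd_fin ht.
exists t, (mkseq (fun i => addb (z i) (t i)) N); split => //.
apply: functional_extensionality_dep => i; rewrite /flip /vec.
have [hi|hi] := ltnP i N.
  rewrite nth_mkseq //; by case: (z i); case: (t i).
rewrite nth_default ?size_mkseq // hN //; by case: (t i).
Qed.

Lemma T_not_covered k T (G : nat -> set cantor_space) : maximal_thin k T ->
  (forall n, good (G n)) -> ~ (forall z, T z -> exists n, G n z).
Proof.
move=> hT hG hcov.
pose H (j : nat) : set cantor_space :=
  match @unpickle (seq bool * nat)%type j with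
  | Some (s, n) => flip (vec s) @^-1` G n
  | None => set0 end.
have hH : forall j, good (H j).
  move=> j; rewrite /H; case: (unpickle j) => [[s n]|]; last exact: good_set0.
  exact: good_flip.
have [z [_ hz]] := good_baire hH (fun _ => false) 0.
have [t [s [Tt e]]] := maximal_cover z hT.
have [n Gt] := hcov t Tt.
apply: (hz (pickle (s, n))); rewrite /H pickleK /=; by rewrite e.
Qed.

Definition BP (A : set cantor_space) := exists U, open U /\
  exists G : nat -> set cantor_space, (forall n, good (G n)) /\
    forall z, (exists n, G n z) \/ (A z <-> U z).

Lemma good_boundary (U : set cantor_space) : open U -> good (closure U `\` U).
Proof.
move=> oU x m.
have [[y [hy Uy]]|hno] := pselect (exists y, cyl x m y /\ U y).
  have : nbhs y U by move: oU; rewrite openE => /(_ y Uy).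
  move=> /nbhs_cyl [n hn].
  exists y, (m + n).+1; split.
  - by rewrite ltnS leq_addr.
  - move=> z hz; apply: (cyl_trans hy); apply: cyl_le hz.
    exact: leq_trans (leq_addr n m) (leqnSn _).
  - move=> z hz [_]; apply; apply: hn.
    apply: cyl_le hz; exact: leq_trans (leq_addl m n) (leqnSn _).
exists x, m.+1; split => //.
- exact: cyl_le.
- move=> z hz [cz _].
  have [w [Uw hw]] := cz _ (cyl_nbhs_self z m.+1).
  apply: hno; exists w; split => //.
  apply: cyl_le (leqnSn m) _ _; exact: cyl_trans hz _ hw.
Qed.

Lemma BP_sigma : sigma_algebra setT BP.
Proof.
split.
- exists set0; split; first exact: open0.
  exists (fun _ => set0); split; first by move=> _; exact: good_set0.
  by move=> z; right.
- move=> A [U [oU [G [hG hz]]]].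
  exists (~` closure U); split; first by apply: closed_openC; exact: closed_closure.
  exists (fun n => if n is n'.+1 then G n' else closure U `\` U); split.
    by case=> [|n]; [exact: good_boundary|exact: hG].
  move=> z; have [[n Gn]|] := pselect (exists n, G n z); first by left; exists n.+1.
  move=> nG; have [bd|nbd] := pselect ((closure U `\` U) z); first by left; exists 0.
  right; case: (hz z) => [//|[h1 h2]].
  split.
  + move=> [_ nA] cU; apply: nA; apply: h2; apply: contrapT => nU; exact: nbd.
  + move=> ncU; split => // Az; apply: ncU; apply: subset_closure; exact: h1.
- move=> A hA.
  have hA' : forall j, exists p : set cantor_space * (nat -> set cantor_space),
      [/\ open p.1, forall n, good (p.2 n) &
          forall z, (exists n, p.2 n z) \/ (A j z <-> p.1 z)].
    move=> j; have [U [oU [G [hG hz]]]] := hA j; by exists (U, G).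
  have [f hf] := choice hA'.
  exists (\bigcup_j (f j).1); split.
    by apply: bigcup_open => j _; have [] := hf j.
  exists (fun k => match @unpickle (nat * nat)%type k with
                 | Some (j, n) => (f j).2 n | None => set0 end); split.
    move=> k; case: (unpickle k) => [[j n]|]; last exact: good_set0.
    by have [] := hf j.
  move=> z; have [[j [n hjn]]|hno] := pselect (exists j n, (f j).2 n z).
    by left; exists (pickle (j, n)); rewrite pickleK.
  right; have hj : forall j, A j z <-> (f j).1 z.
    move=> j; have [_ _ h] := hf j; case: (h z) => // [[n hn]].
    by exfalso; apply: hno; exists j, n.
  split; move=> [j _ hjz]; exists j => //; exact/hj.
Qed.

Lemma Borel_BP (A : set cantor_space) : Borel A -> BP A.
Proof.
move=> hA; apply: (smallest_sub BP_sigma _ hA) => U oU.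
exists U; split => //; exists (fun _ => set0); split; first by move=> _; exact: good_set0.
by move=> z; right.
Qed.

Theorem proposition18 (k : nat) (hk : (2 <= k)%N) (T : set cantor_space) :
  maximal_thin k T -> ~ Borel T /\ ~ meager T.
Proof.
move=> hT; split.
  move=> /Borel_BP [U [oU [G [hG hcov]]]].
  have [[y Uy]|hU] := pselect (exists y, U y); last first.
    apply: (T_not_covered hT hG) => z Tz.
    case: (hcov z) => // [[h _]]; exfalso; apply: hU; exists z; exact: h.
  have : nbhs y U by move: oU; rewrite openE => /(_ y Uy).
  move=> /nbhs_cyl [n hn].
  pose e : cantor_space := fun i => i == n.
  have [z [hz hG']] := good_baire (fun j => goodU (hG j) (good_flip e (hG j))) y n.
  have hz' : cyl y n (flip e z).
    move=> i hi; rewrite /flip /e -(hz i hi).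
    have -> : (i == n) = false by apply/negbTE/eqP => eq; move: hi; rewrite eq ltnn.
    by case: (z i).
  have inT : forall w, cyl y n w -> (forall j, ~ G j w) -> T w.
    move=> w hw hGw; case: (hcov w) => [[j hj]|[_ h]]; first by case: (hGw j).
    by apply: h; apply: hn.
  have Tz : T z by apply: inT => // j hj; apply: (hG' j); left.
  have Tfz : T (flip e z).
    by apply: inT => // j hj; apply: (hG' j); right.
  have hne : z <> flip e z.
    move=> eq; have := congr1 (fun f => f n) eq; rewrite /flip /e eqxx.
    by case: (z n).
  have [s [hu hs hd]] := hT.1 _ _ Tz Tfz hne.
  have hsn : forall i, i \in s -> i = n.
    move=> i /hd; rewrite /flip /e; case: (i =P n) => [h _|_]; first exact: h.
    by case: (z i).
  clear hd; case: s hu hs hsn => [|a [|b s]] hu hs hsn.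
  - by move: hk; rewrite -hs.
  - by move: hk; rewrite -hs.
  have ha := hsn a (mem_head _ _).
  have hb : b = n by apply: hsn; rewrite in_cons mem_head orbT.
  by move: hu; rewrite /= ha hb in_cons eqxx.
move=> [F [hF hcov]].
apply: (T_not_covered hT (fun n => good_nd (hF n))) => z /hcov [n _ h].
by exists n.
Qed.
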